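(* Let $A$ be a Noetherian ring, $\mathcal{R}$ a standard graded ring with $\mathcal{R}_0=A$, and $X\in\operatorname{^*Mod}_f(\mathcal{R})$. Assume $\operatorname{Ass}_A X$ is finite and that there is $m$ such that $\operatorname{Ass}_A H^0_{\mathcal{R}_+}(X)_n=\operatorname{Ass}_A H^0_{\mathcal{R}_+}(X)_m$ for all $n\ge m$. Then there exists $n_0$ such that $\operatorname{Ass}_A X_n=\operatorname{Ass}_A X_{n_0}$ for all $n\ge n_0$.
   Context: A standard graded ring $\mathcal{R}=\bigoplus_{n\ge0}\mathcal{R}_n$ with $\mathcal{R}_0=A$ is a Noetherian $\mathbb{N}$-graded commutative ring generated as an $A$-algebra by finitely many elements of $\mathcal{R}_1$; $\mathcal{R}_+=\bigoplus_{n\ge1}\mathcal{R}_n$. $\operatorname{^*Mod}_f(\mathcal{R})$ is the full subcategory of graded $\mathcal{R}$-modules $X=\bigoplus_{n\in\mathbb{Z}}X_n$ with every $X_n$ a finitely generated $A$-module and $X_n=0$ for $n\ll0$. $H^0_{\mathcal{R}_+}(X)=\{x\in X:\mathcal{R}_+^k x=0\text{ for some }k\}$. $\operatorname{Ass}_A X$ denotes the associated primes of $X$ regarded as an $A$-module. *)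

(* Defs.v *)
From HB Require Import structures.
From mathcomp Require Import all_boot all_order all_algebra.
Set Implicit Arguments. Unset Strict Implicit. Unset Printing Implicit Defensive.
Import Order.TTheory GRing.Theory Num.Theory.
Local Open Scope ring_scope.

(* Subsets are Prop-valued predicates; ideals/primes are compared
   extensionally (as sets). *)

Definition is_ideal (A : comNzRingType) (I : A -> Prop) : Prop :=
  [/\ I 0, (forall a b, I a -> I b -> I (a + b)) & (forall a b, I b -> I (a * b))].

Definition fg_ideal (A : comNzRingType) (I : A -> Prop) : Prop :=
  exists s : seq A, forall a, I a <->
    exists c : nat -> A, a = \sum_(i < size s) c i * s`_i.

Definition noetherian (A : comNzRingType) : Prop :=
  forall I : A -> Prop, is_ideal I -> fg_ideal I.

Definition prime_ideal (A : comNzRingType) (p : A -> Prop) : Prop :=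
  [/\ is_ideal p, ~ p 1 & forall a b, p (a * b) -> p a \/ p b].

Definition graded_ring (R : comNzRingType) (Rg : nat -> R -> Prop) : Prop :=
  [/\ (forall n, Rg n 0 /\ (forall x y, Rg n x -> Rg n y -> Rg n (x - y))),
      Rg 0%N 1,
      (forall m n a b, Rg m a -> Rg n b -> Rg (m + n)%N (a * b)),
      (forall r, exists N (f : nat -> R), (forall i, Rg i (f i)) /\ r = \sum_(i < N) f i)
    & (forall N (f : nat -> R), (forall i, Rg i (f i)) -> \sum_(i < N) f i = 0 ->
          forall i, (i < N)%N -> f i = 0)].

Definition in_subalg (A R : comNzRingType) (phi : {rmorphism A -> R}) (s : seq R) (r : R) : Prop :=
  forall S : R -> Prop,
    (forall a, S (phi a)) -> (forall i, (i < size s)%N -> S s`_i) ->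
    (forall x y, S x -> S y -> S (x + y)) -> (forall x y, S x -> S y -> S (x * y)) ->
    S r.

(** R is a standard graded ring with R_0 = A (A identified with R_0 via the
    injective ring morphism phi whose image is exactly Rg 0). *)
Definition standard_graded (A R : comNzRingType) (phi : {rmorphism A -> R})
    (Rg : nat -> R -> Prop) : Prop :=
  [/\ graded_ring Rg, noetherian R,
      injective phi, (forall r, Rg 0%N r <-> exists a, r = phi a)
    & exists s : seq R, (forall i, (i < size s)%N -> Rg 1%N s`_i) /\
        forall r, in_subalg phi s r].

Definition Rplus (R : comNzRingType) (Rg : nat -> R -> Prop) (r : R) : Prop :=
  exists N (f : nat -> R), [/\ forall i, Rg i (f i), f 0%N = 0 & r = \sum_(i < N) f i].

Definition graded_module (R : comNzRingType) (Rg : nat -> R -> Prop)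
    (X : lmodType R) (Xg : int -> X -> Prop) : Prop :=
  [/\ (forall n, Xg n 0 /\ (forall x y, Xg n x -> Xg n y -> Xg n (x - y))),
      (forall (m : nat) (n : int) r x, Rg m r -> Xg n x -> Xg (m%:Z + n) (r *: x)),
      (forall x : X, exists s : seq int, uniq s /\
          exists f : int -> X, (forall i, Xg i (f i)) /\ x = \sum_(i <- s) f i)
    & (forall (s : seq int) (f : int -> X), uniq s -> (forall i, Xg i (f i)) ->
          \sum_(i <- s) f i = 0 -> forall i, i \in s -> f i = 0)].

Definition fg_Amodule (A R : comNzRingType) (phi : {rmorphism A -> R}) (X : lmodType R)
    (S : X -> Prop) : Prop :=
  exists g : seq X, (forall i, (i < size g)%N -> S g`_i) /\
    forall x, S x <-> exists c : nat -> A, x = \sum_(i < size g) phi (c i) *: g`_i.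

Definition starModf (A R : comNzRingType) (phi : {rmorphism A -> R}) (Rg : nat -> R -> Prop)
    (X : lmodType R) (Xg : int -> X -> Prop) : Prop :=
  [/\ graded_module Rg Xg,
      (forall n, fg_Amodule phi (Xg n))
    & exists n1 : int, forall n : int, n < n1 -> forall x, Xg n x -> x = 0].

(** H^0_{R_+}(X) = { x | R_+^k x = 0 for some k }; R_+^k x = 0 means that
    every product of k elements of R_+ (the generators of R_+^k) kills x. *)
Definition H0 (R : comNzRingType) (Rg : nat -> R -> Prop) (X : lmodType R) (x : X) : Prop :=
  exists k : nat, forall rs : seq R, size rs = k ->
    (forall i, (i < size rs)%N -> Rplus Rg rs`_i) -> (\prod_(r <- rs) r) *: x = 0.

Definition isAss (A R : comNzRingType) (phi : {rmorphism A -> R}) (X : lmodType R)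
    (S : X -> Prop) (p : A -> Prop) : Prop :=
  prime_ideal p /\ exists x, S x /\ forall a, p a <-> phi a *: x = 0.

Definition Ass_finite (A R : comNzRingType) (phi : {rmorphism A -> R}) (X : lmodType R)
    (S : X -> Prop) : Prop :=
  exists (N : nat) (L : nat -> A -> Prop), forall p, isAss phi S p ->
    exists i, (i < N)%N /\ forall a, p a <-> L i a.

Definition Ass_eq (A R : comNzRingType) (phi : {rmorphism A -> R}) (X : lmodType R)
    (S T : X -> Prop) : Prop :=
  forall p : A -> Prop, isAss phi S p <-> isAss phi T p.

(* Main.v *)
Require Import Defs.
From HB Require Import structures.
From mathcomp Require Import all_boot all_order all_algebra.
Set Implicit Arguments. Unset Strict Implicit. Unset Printing Implicit Defensive.
Import Order.TTheory GRing.Theory Num.Theory.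
Local Open Scope ring_scope.
From Stdlib Require Import Classical FunctionalExtensionality PropExtensionality.
From mathcomp Require Import ring.

Definition Igen (R : comNzRingType) (Rg : nat -> R -> Prop) (k : nat) (r : R) : Prop :=
  forall I : R -> Prop, is_ideal I -> (forall u, Rg k u -> I u) -> I r.

Lemma Igen_ideal (R : comNzRingType) (Rg : nat -> R -> Prop) k : is_ideal (Igen Rg k).
Proof.
split.
- by move=> I [I0 _ _] _.
- move=> a b Ha Hb I HI HR; case: (HI) => _ Hadd _; apply: Hadd; [exact: Ha | exact: Hb].
- move=> a b Hb I HI HR; case: (HI) => _ _ Hm; apply: Hm; exact: Hb.
Qed.

Lemma Igen_sub (R : comNzRingType) (Rg : nat -> R -> Prop) k u : Rg k u -> Igen Rg k u.
Proof. by move=> Hu I _ HR; apply: HR. Qed.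

Lemma ideal_opp (R : comNzRingType) (I : R -> Prop) a : is_ideal I -> I a -> I (- a).
Proof. by move=> [_ _ Hm] Ha; rewrite -mulN1r; apply: Hm. Qed.

Lemma ideal_sum (R : comNzRingType) (I : R -> Prop) N (f : nat -> R) :
  is_ideal I -> (forall i, (i < N)%N -> I (f i)) -> I (\sum_(i < N) f i).
Proof.
move=> [I0 Iadd _] Hf; apply: (big_ind I) => //.
by move=> i _; apply: Hf.
Qed.

Lemma Igen_mul (R : comNzRingType) (Rg : nat -> R -> Prop) (gR : graded_ring Rg) a b u v :
  Igen Rg a u -> Igen Rg b v -> Igen Rg (a + b) (u * v).
Proof.
move=> Hu Hv I HI HRI.
have [_ _ Hmul _ _] := gR.
case: (HI) => I0 Iadd Imul.
pose T := fun v => forall u, Igen Rg a u -> I (u * v).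
suff: T v by apply.
apply: Hv.
- split.
  + by move=> u' _; rewrite mulr0.
  + move=> x y Hx Hy u' Hu'; rewrite mulrDr; apply: Iadd; [exact: Hx | exact: Hy].
  + move=> c y Hy u' Hu'; rewrite mulrCA; apply: Imul; exact: Hy.
- move=> w Hw u' Hu'.
  pose T' := fun u => I (u * w).
  apply: (Hu' T').
  + split; rewrite /T'.
    * by rewrite mul0r.
    * by move=> x y Hx Hy; rewrite mulrDl; apply: Iadd.
    * by move=> c y Hy; rewrite -mulrA; apply: Imul.
  + by move=> z Hz; apply: HRI; apply: Hmul.
Qed.

Definition P0 (R : comNzRingType) (Rg : nat -> R -> Prop) (r c : R) : Prop :=
  exists N (f : nat -> R), [/\ (0 < N)%N, forall i, Rg i (f i), r = \sum_(i < N) f i & f 0%N = c].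

Lemma pad (R : comNzRingType) (f : nat -> R) N M : (N <= M)%N ->
  \sum_(i < N) f i = \sum_(i < M) (if (i < N)%N then f i else 0).
Proof. by move=> le; rewrite (big_ord_widen M f le) big_mkcond. Qed.

Lemma pad_graded (R : comNzRingType) (Rg : nat -> R -> Prop) (gR : graded_ring Rg) (f : nat -> R) N :
  (forall i, Rg i (f i)) -> forall i, Rg i (if (i < N)%N then f i else 0).
Proof. have [Hs _ _ _ _] := gR; by move=> Hf i; case: ifP => _; [apply: Hf | apply: (Hs i).1]. Qed.

Lemma P0_unique (R : comNzRingType) (Rg : nat -> R -> Prop) (gR : graded_ring Rg) r c c' :
  P0 Rg r c -> P0 Rg r c' -> c = c'.
Proof.
case=> N [f [N0 Hf Hr <-]] [N' [g [N0' Hg Heq <-]]].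
have [Hsub _ _ _ Huniq] := gR.
pose F i := (if (i < N)%N then f i else 0) - (if (i < N')%N then g i else 0).
have HF : forall i, Rg i (F i).
  move=> i; rewrite /F; apply: (Hsub i).2; [exact: (pad_graded gR N Hf) | exact: (pad_graded gR N' Hg)].
have HS : \sum_(i < N + N') F i = 0.
  rewrite sumrB -(pad f (leq_addr N' N)) -(pad g (leq_addl N N')).
  by rewrite -Hr -Heq subrr.
have := Huniq (N + N')%N F HF HS 0%N (ltn_addr _ N0).
by rewrite /F N0 N0'; apply: subr0_eq.
Qed.

Lemma Rg_add (R : comNzRingType) (Rg : nat -> R -> Prop) (gR : graded_ring Rg) i x y :
  Rg i x -> Rg i y -> Rg i (x + y).
Proof.
have [Hs _ _ _ _] := gR; move=> Hx Hy.
have Hy' : Rg i (- y) by rewrite -sub0r; apply: (Hs i).2 => //; apply: (Hs i).1.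
by rewrite -[y]opprK; apply: (Hs i).2.
Qed.

Lemma P0_add (R : comNzRingType) (Rg : nat -> R -> Prop) (gR : graded_ring Rg) r c r' c' :
  P0 Rg r c -> P0 Rg r' c' -> P0 Rg (r + r') (c + c').
Proof.
case=> N [f [N0 Hf Hr <-]] [N' [g [N0' Hg Heq <-]]].
have [Hsub _ _ _ _] := gR.
exists (N + N')%N, (fun i => (if (i < N)%N then f i else 0) + (if (i < N')%N then g i else 0)).
split.
- exact: ltn_addr.
- by move=> i; apply: Rg_add => //; [exact: (pad_graded gR N Hf) | exact: (pad_graded gR N' Hg)].
- by rewrite big_split /= -(pad f (leq_addr N' N)) -(pad g (leq_addl N N')) Hr Heq.
- by rewrite /= N0 N0'.
Qed.

Lemma P0_const (R : comNzRingType) (Rg : nat -> R -> Prop) (gR : graded_ring Rg) c :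
  Rg 0%N c -> P0 Rg c c.
Proof.
have [Hsub _ _ _ _] := gR.
move=> Hc; exists 1%N, (fun i => if i == 0%N then c else 0); split => //.
- by move=> [|i] //=; apply: (Hsub _).1.
- by rewrite big_ord1.
Qed.

Lemma P0_hom (R : comNzRingType) (Rg : nat -> R -> Prop) (gR : graded_ring Rg) i u :
  (0 < i)%N -> Rg i u -> P0 Rg u 0.
Proof.
have [Hsub _ _ _ _] := gR.
move=> Hi Hu; exists i.+1, (fun j => if j == i then u else 0); split => //.
- by move=> j; case: eqP => [->|_] //; apply: (Hsub _).1.
- rewrite big_ord_recr /= eqxx big1 ?add0r // => j _.
  by rewrite ltn_eqF.
- by rewrite eq_sym; move: Hi; rewrite lt0n => /negbTE ->.
Qed.

Lemma P0_mulR1 (R : comNzRingType) (Rg : nat -> R -> Prop) (gR : graded_ring Rg) g v :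
  Rg 1%N v -> P0 Rg (g * v) 0.
Proof.
have [Hsub _ Hmul Hdec _] := gR.
move=> Hv; have [N [f [Hf ->]]] := Hdec g.
exists N.+1, (fun j => if j is j'.+1 then f j' * v else 0); split => //.
- by move=> [|j]; [apply: (Hsub _).1 | rewrite -addn1; apply: Hmul].
- by rewrite big_ord_recl /= add0r mulr_suml.
Qed.

Lemma hom_in_I1 (A R : comNzRingType) (phi : {rmorphism A -> R}) (Rg : nat -> R -> Prop) :
  standard_graded phi Rg -> forall i u, (0 < i)%N -> Rg i u -> Igen Rg 1 u.
Proof.
move=> [gR _ _ Hphi0 [s [Hs1 Hsub]]] i u Hi Hu.
have [HRs _ HRm _ _] := gR.
have HI := Igen_ideal Rg 1.
have [I0 Iadd Imul] := HI.
have Z : forall w, Igen Rg 1 w -> forall g, P0 Rg (g * w) 0.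
  move=> w Hw; apply: (Hw (fun w => forall g, P0 Rg (g * w) 0)).
  - split.
    + by move=> g; rewrite mulr0; apply: P0_const => //; apply: (HRs _).1.
    + move=> x y Hx Hy g; rewrite mulrDr; have := P0_add gR (Hx g) (Hy g); by rewrite addr0.
    + by move=> c y Hy g; rewrite mulrA; apply: Hy.
  - by move=> v Hv g; apply: P0_mulR1.
have S : exists c, Rg 0%N c /\ Igen Rg 1 (u - c).
  apply: (Hsub u (fun r => exists c, Rg 0%N c /\ Igen Rg 1 (r - c))).
  - move=> a; exists (phi a); split; first by apply/Hphi0; exists a.
    by rewrite subrr.
  - move=> j Hj; exists 0; split; first by apply: (HRs _).1.
    by rewrite subr0; apply: Igen_sub; apply: Hs1.
  - move=> x y [c [Hc Hx]] [c' [Hc' Hy]]; exists (c + c'); split; first exact: Rg_add.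
    by rewrite opprD addrACA; apply: Iadd.
  - move=> x y [c [Hc Hx]] [c' [Hc' Hy]]; exists (c * c'); split; first exact: (HRm 0 0)%N.
    have -> : x * y - c * c' = x * (y - c') + c' * (x - c).
      by ring.
    by apply: Iadd; apply: Imul.
have [c [Hc Hw]] := S.
have P1 : P0 Rg u c.
  have := P0_add gR (P0_const gR Hc) (Z _ Hw 1).
  by rewrite mul1r addr0 addrC subrK.
have P2 := P0_hom gR Hi Hu.
have Ec := P0_unique gR P1 P2.
by move: Hw; rewrite Ec subr0.
Qed.

Lemma Rplus_I1 (A R : comNzRingType) (phi : {rmorphism A -> R}) (Rg : nat -> R -> Prop) :
  standard_graded phi Rg -> forall r, Rplus Rg r -> Igen Rg 1 r.
Proof.
move=> Hstd r [N [f [Hf Hf0 ->]]].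
apply: ideal_sum; first exact: Igen_ideal.
move=> [|i] _; first by rewrite Hf0; case: (Igen_ideal Rg 1).
exact: (hom_in_I1 Hstd (ltn0Sn i) (Hf i.+1)).
Qed.

Lemma Igen_prod (A R : comNzRingType) (phi : {rmorphism A -> R}) (Rg : nat -> R -> Prop) :
  standard_graded phi Rg -> forall rs : seq R,
  (forall i, (i < size rs)%N -> Rplus Rg rs`_i) -> Igen Rg (size rs) (\prod_(r <- rs) r).
Proof.
move=> Hstd; have [gR _ _ _ _] := Hstd; have [_ H1 _ _ _] := gR.
elim=> [|a l IH] Hrs.
- by rewrite big_nil; apply: Igen_sub.
- rewrite big_cons /= -add1n; apply: Igen_mul => //.
  + by apply: (Rplus_I1 Hstd); apply: (Hrs 0%N).
  + by apply: IH => i Hi; apply: (Hrs i.+1).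
Qed.

Lemma isAss_mono (A R : comNzRingType) (phi : {rmorphism A -> R}) (X : lmodType R)
  (S T : X -> Prop) p : (forall x, S x -> T x) -> isAss phi S p -> isAss phi T p.
Proof. by move=> HST [Hp [x [Hx Ha]]]; split => //; exists x; split => //; apply: HST. Qed.

Lemma isAss_ext (A R : comNzRingType) (phi : {rmorphism A -> R}) (X : lmodType R)
  (S : X -> Prop) (p q : A -> Prop) : (forall a, p a <-> q a) -> isAss phi S p -> isAss phi S q.
Proof.
move=> Hpq; have -> // : p = q.
by apply: functional_extensionality => a; apply: propositional_extensionality.
Qed.

Lemma propag (A R : comNzRingType) (phi : {rmorphism A -> R})
    (Rg : nat -> R -> Prop) (X : lmodType R) (Xg : int -> X -> Prop) (p : A -> Prop)
    (n n' : int) (x : X) :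
  standard_graded phi Rg -> starModf phi Rg Xg -> prime_ideal p ->
  Xg n x -> (forall a, p a <-> phi a *: x = 0) -> n <= n' ->
  ~ isAss phi (fun x => H0 Rg x /\ Xg n x) p -> isAss phi (Xg n') p.
Proof.
move=> Hstd [[_ Hscal _ _] _ _] Hp Hx Hann nle HnotH.
have [gR noethR _ Hphi0 _] := Hstd.
apply: NNPP => Hnot.
pose k := `|n' - n|%N.
have Hk : k%:Z + n = n'.
  by rewrite /k gez0_abs ?subr_ge0 // subrK.
have [[I0 Iadd Imul] Hp1 Hpm] := Hp.
pose J := fun r : R => exists t, ~ p t /\ (phi t * r) *: x = 0.
have HJ : is_ideal J.
  split.
  - by exists 1; split => //; rewrite mulr0 scale0r.
  - move=> a b [t [nt Ht]] [t' [nt' Ht']]; exists (t * t'); split.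
    + by move/Hpm => [].
    + rewrite rmorphM mulrDr scalerDl.
      have -> : phi t * phi t' * a = phi t' * (phi t * a) by ring.
      have -> : phi t * phi t' * b = phi t * (phi t' * b) by ring.
      by rewrite -[(phi t' * _) *: x]scalerA Ht scaler0 add0r -scalerA Ht' scaler0.
  - move=> a b [t [nt Ht]]; exists t; split => //.
    by rewrite mulrCA -scalerA Ht scaler0.
have HRk : forall u, Rg k u -> J u.
  move=> u Hu; apply: NNPP => HnJ; apply: Hnot; split => //.
  exists (u *: x); split; first by rewrite -Hk; exact: Hscal.
  move=> a; split.
  - move=> pa; rewrite scalerA mulrC -scalerA.
    by rewrite (proj1 (Hann a) pa) scaler0.
  - move=> H0; apply: NNPP => npa; apply: HnJ; exists a; split => //.
    by rewrite -scalerA.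
have HIk : forall u, Igen Rg k u -> J u by move=> u Hu; apply: Hu.
have [gs Hgs] := noethR J HJ.
have Hgen : forall i, (i < size gs)%N -> J gs`_i.
  move=> i Hi; apply/Hgs; exists (fun j => if j == i then 1 else 0).
  rewrite (bigD1 (Ordinal Hi)) //= eqxx mul1r big1 ?addr0 // => j Hj.
  rewrite ifF ?mul0r //; apply: contraNF Hj => /eqP Hji; apply/eqP; exact: val_inj.
have Ht : exists t, ~ p t /\ forall i, (i < size gs)%N -> (phi t * gs`_i) *: x = 0.
  suff: forall M, exists t, ~ p t /\ forall i, (i < M)%N -> (i < size gs)%N ->
      (phi t * gs`_i) *: x = 0.
    by move=> /(_ (size gs)) [t [nt Ht]]; exists t; split => // i Hi; apply: Ht.
  elim=> [|M [t [nt Ht]]]; first by exists 1.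
  case: (ltnP M (size gs)) => HM.
  - have [t' [nt' Ht']] := Hgen M HM; exists (t * t'); split.
    + by move/Hpm => [].
    + move=> i Hi Hi'; rewrite rmorphM; case: (ltnP i M) => iM.
      * have -> : phi t * phi t' * gs`_i = phi t' * (phi t * gs`_i) by ring.
        by rewrite -scalerA Ht ?scaler0.
      * have -> : i = M by apply/eqP; rewrite eqn_leq iM -ltnS Hi.
        by rewrite -mulrA -scalerA Ht' scaler0.
  - exists t; split => // i Hi Hi'; apply: Ht => //; exact: leq_trans Hi' HM.
have [t [nt Htk]] := Ht.
have Hkill : forall a, J a -> (phi t * a) *: x = 0.
  move=> a /Hgs [c ->]; rewrite mulr_sumr scaler_suml big1 // => i _.
  by rewrite mulrCA -scalerA Htk ?scaler0.
apply: HnotH; split => //; exists (phi t *: x); split; first split.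
- exists k => rs Hsz Hrs.
  rewrite scalerA mulrC; apply: Hkill; apply: HIk; rewrite -Hsz.
  exact: (Igen_prod Hstd).
- have Hr0 : Rg 0%N (phi t) by apply/Hphi0; exists t.
  by have := Hscal 0%N n (phi t) x Hr0 Hx; rewrite add0r.
- move=> a; rewrite scalerA -rmorphM; split.
  + by move=> pa; apply/Hann; rewrite mulrC; apply: Imul.
  + by move/Hann/Hpm => [].
Qed.

Lemma EV (A R : comNzRingType) (phi : {rmorphism A -> R})
    (Rg : nat -> R -> Prop) (X : lmodType R) (Xg : int -> X -> Prop) (m : int) :
  standard_graded phi Rg -> starModf phi Rg Xg ->
  (forall n : int, m <= n ->
      Ass_eq phi (fun x => H0 Rg x /\ Xg n x) (fun x => H0 Rg x /\ Xg m x)) ->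
  forall p : A -> Prop, exists N0 : int,
    (forall n, N0 <= n -> isAss phi (Xg n) p) \/ (forall n, N0 <= n -> ~ isAss phi (Xg n) p).
Proof.
move=> Hstd Hmod HH p.
case: (classic (isAss phi (fun x => H0 Rg x /\ Xg m x) p)) => Hm.
- exists m; left => n Hn; have := (HH n Hn p).2 Hm.
  by apply: isAss_mono => x [].
- case: (classic (exists n, m <= n /\ isAss phi (Xg n) p)) => [[n [Hmn [Hp [x [Hx Hann]]]]] | Hno].
  + exists n; left => n' Hn'.
    apply: (propag Hstd Hmod Hp Hx Hann Hn') => HA; apply: Hm; exact: (HH n Hmn p).1 HA.
  + by exists m; right => n Hn HA; apply: Hno; exists n.
Qed.

Theorem theorem4p5 (A R : comNzRingType) (phi : {rmorphism A -> R})
    (Rg : nat -> R -> Prop) (X : lmodType R) (Xg : int -> X -> Prop) :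
  noetherian A ->
  standard_graded phi Rg ->
  starModf phi Rg Xg ->
  Ass_finite phi (fun _ : X => True) ->
  (exists m : int, forall n : int, m <= n ->
      Ass_eq phi (fun x => H0 Rg x /\ Xg n x) (fun x => H0 Rg x /\ Xg m x)) ->
  exists n0 : int, forall n : int, n0 <= n -> Ass_eq phi (Xg n) (Xg n0).
Proof.
move=> _ Hstd Hmod [N [L HL]] [m HH].
have Hev := EV Hstd Hmod HH.
have Hbound : forall M, exists B : int, forall i, (i < M)%N ->
    (forall n, B <= n -> isAss phi (Xg n) (L i)) \/ (forall n, B <= n -> ~ isAss phi (Xg n) (L i)).
  elim=> [|M [B HB]]; first by exists 0.
  have [B' HB'] := Hev (L M).
  have HB1 : B <= Num.max B B' by rewrite le_max lexx.
  have HB2 : B' <= Num.max B B' by rewrite le_max lexx orbT.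
  exists (Num.max B B') => i; rewrite ltnS leq_eqVlt => /orP [/eqP -> | Hi].
  - by case: HB' => H; [left|right] => n Hn; apply: H; apply: le_trans HB2 Hn.
  - by case: (HB i Hi) => H; [left|right] => n Hn; apply: H; apply: le_trans HB1 Hn.
have [B HB] := Hbound N.
have key : forall n p, B <= n -> isAss phi (Xg n) p -> isAss phi (Xg B) p.
  move=> n p Hn HA.
  have HAX : isAss phi (fun _ : X => True) p := isAss_mono (fun _ _ => I) HA.
  have [i [Hi Hpi]] := HL p HAX.
  have HA' := isAss_ext Hpi HA.
  apply: isAss_ext (fun a => iff_sym (Hpi a)) _.
  case: (HB i Hi) => H; first by apply: H.
  by exfalso; exact: H n Hn HA'.
have key2 : forall n p, B <= n -> isAss phi (Xg B) p -> isAss phi (Xg n) p.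
  move=> n p Hn HA.
  have HAX : isAss phi (fun _ : X => True) p := isAss_mono (fun _ _ => I) HA.
  have [i [Hi Hpi]] := HL p HAX.
  have HA' := isAss_ext Hpi HA.
  apply: isAss_ext (fun a => iff_sym (Hpi a)) _.
  case: (HB i Hi) => H; first by apply: H.
  by exfalso; exact: H B (lexx B) HA'.
exists B => n Hn p; split; [exact: key | exact: key2].
Qed.
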